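(* Let $n \ge 4$, let $\lambda = (\lambda_1,\lambda_2)$ with integers $\lambda_1 \ge \lambda_2 \ge 0$, and let $(\lambda, i, j, k)$ be an admissible tuple. Then the function $\psi_{\lambda,(i,j,k)} \colon \mathcal{I}_2 \to V$ is $\mathrm{O}(n)$-equivariant, i.e. $\psi_{\lambda,(i,j,k)}(gJ) = \pi(g)\psi_{\lambda,(i,j,k)}(J)$ for all $g \in \mathrm{O}(n)$ and $J \in \mathcal{I}_2$.
   Context: Setting. Fix an angle $\theta$ and consider the graph on $S^{n-1}$ in which distinct $x,y$ are adjacent if $\langle x,y\rangle > \cos\theta$; $\mathcal{I}_2$ is the set of independent sets of this graph of cardinality at most $2$ (including $\emptyset$), and $\mathcal{I}_{=i}$ those of cardinality exactly $i$. $\mathrm{O}(n)$ (real orthogonal $n\times n$ matrices) acts by $g\{x_1,\dots\} = \{gx_1,\dots\}$. $\mathrm{O}(n,\mathbb{C})$ denotes complex $n\times n$ matrices $g$ with $g^{\sf T} g = I$. Representation of $\mathrm{GL}(2)$: let $U = \mathbb{C}^2$ with basis $e_1,e_2$ and tautological action, $m = \lambda_1 - \lambda_2$, $W = \mathrm{Sym}^{\lambda_2}(\wedge^2 U)\otimes \mathrm{Sym}^m(U)$ with the induced action $\rho \colon \mathrm{GL}(2)\to \mathrm{GL}(W)$ (extended polynomially to all $2\times 2$ complex matrices), basis $w_k = (e_1\wedge e_2)^{\lambda_2} e_1^{m-k} e_2^k$, $k = 0,\dots,m$, and inner product making this basis orthonormal. Put $c_1(k) = \lambda_2 + m - k$,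 $c_2(k) = \lambda_2 + k$. Induced representation of $\mathrm{O}(n)$: let $\omega = (I_2 \ \ iI_2 \ \ 0)$ (a $2\times n$ complex matrix) and $\epsilon = \binom{I_2}{0}$ (an $n \times 2$ matrix). For $w \in W$ define $f_w \colon \mathrm{O}(n,\mathbb{C}) \to W$, $f_w(\gamma) = \rho(\omega\gamma\epsilon)w$, and let $V = \mathrm{span}\{R_g f_w : g \in \mathrm{O}(n,\mathbb{C}), w\in W\}$ where $(R_g f)(\gamma) = f(\gamma g)$; $\pi$ is the representation of $\mathrm{O}(n)$ on $V$ by right translation, with inner product $\langle f_1,f_2\rangle = \int_{\mathrm{O}(n)} \langle f_1(\gamma), f_2(\gamma)\rangle\, d\gamma$ (normalized Haar measure). Let $\Psi(w) = f_w$. Orbit representatives and section: for $J\in\mathcal{I}_2$ with $|J|\ge 1$ write $J = \{x,y\}$ (with $x=y$ if $|J|=1$) and put $p_j(J) = \langle x,y\rangle^j$, $q_1(J) = \sqrt{2+2\langle x,y\rangle}$, $q_2(J) = \sqrt{2 - 2\langle x,y\rangle}$; the representative of the orbit $\mathrm{O}(n)J$ is $R_J = \{(q_1(J)/2, q_2(J)/2, 0,\dots,0), (q_1(J)/2, -q_2(J)/2,0,\dots,0)\}$ (so $e_1$ for singletons), and of $\mathcal{I}_{=0}$ is $\emptyset$. A section is a map $s \colon \mathcal{I}_2 \to \mathrm{O}(n)$ with $s(J)R_J = J$. Admissible tuples $(\lambda,i,j,k)$: for $i=0$: $\lambda = (0,0)$, $j=k=0$; for $i=1$: $\lambda_2 =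 0$, $j = k = 0$; for $i = 2$: any $\lambda$, $j\ge 0$, $0\le k\le \lambda_1-\lambda_2$ with $\lambda_2 + k$ even. Equivariant functions: $\psi_{\lambda,(i,j,k)}(J) = \xi_{\lambda,i,j,k}(J)\,\pi(s(J))\Psi(w_k)$, where $\xi_{\lambda,i,j,k}(J) = 1$ if $i = |J| < 2$, $\xi_{\lambda,i,j,k}(J) = p_j(J) q_1(J)^{c_1(k)} q_2(J)^{c_2(k)}$ if $i = |J| = 2$, and $0$ otherwise (with $0^0 = 1$). *)

(* Defs.v *)
From HB Require Import structures.
From mathcomp Require Import all_boot all_order all_algebra.
From mathcomp Require Import finmap.
From mathcomp Require Import complex.
From mathcomp Require Import mpoly.
From mathcomp Require Import all_classical all_reals all_analysis.

Set Implicit Arguments.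
Unset Strict Implicit.
Unset Printing Implicit Defensive.

Import Order.TTheory GRing.Theory Num.Theory.
Local Open Scope ring_scope.


Notation Cx R := (complex R).
Notation Wty R := (mpoly.mpoly 2 (complex R)).

Section Defs.
Variables (R : realType) (n : nat).

Definition toC (r : R) : Cx R := Complex r 0.
Definition iC : Cx R := Complex 0 1.

Definition dot (x y : 'cV[R]_n) : R := (x^T *m y) 0 0.

Definition on_sphere (x : 'cV[R]_n) : bool := dot x x == 1.

Definition in_On (g : 'M[R]_n) : bool := g^T *m g == 1%:M.

Definition in_OnC (g : 'M[Cx R]_n) : bool := g^T *m g == 1%:M.

(* I_2 for the graph on S^{n-1} with x ~ y iff x <> y and <x,y> > cos theta *)
Definition indep2 (theta : R) (J : {fset 'cV[R]_n}) : Prop :=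
  [/\ (#|` J| <= 2)%N,
      (forall x, x \in J -> on_sphere x) &
      (forall x y, x \in J -> y \in J -> x != y -> ~ (cos theta < dot x y))].

Definition act (g : 'M[R]_n) (J : {fset 'cV[R]_n}) : {fset 'cV[R]_n} :=
  [fset g *m x | x in J]%fset.

(* <x,y> where J = {x,y} (with x = y if |J| = 1); 0 (unused) if J is empty *)
Definition ipJ (J : {fset 'cV[R]_n}) : R :=
  match enum_fset J with
  | [:: x] => dot x x
  | [:: x; y] => dot x y
  | _ => 0
  end.

Definition pJ (j : nat) (J : {fset 'cV[R]_n}) : R := ipJ J ^+ j.
Definition q1 (J : {fset 'cV[R]_n}) : R := Num.sqrt (2 + 2 * ipJ J).
Definition q2 (J : {fset 'cV[R]_n}) : R := Num.sqrt (2 - 2 * ipJ J).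

Definition vec2 (a b : R) : 'cV[R]_n :=
  \col_i (if nat_of_ord i == 0%N then a else if nat_of_ord i == 1%N then b else 0).

(* orbit representative R_J *)
Definition repJ (J : {fset 'cV[R]_n}) : {fset 'cV[R]_n} :=
  if J == fset0%fset then fset0%fset
  else [fset vec2 (q1 J / 2) (q2 J / 2); vec2 (q1 J / 2) (- (q2 J / 2))]%fset.

Definition is_section (theta : R) (s : {fset 'cV[R]_n} -> 'M[R]_n) : Prop :=
  forall J, indep2 theta J -> in_On (s J) /\ act (s J) (repJ J) = J.

(* W = Sym^{l2}(wedge^2 U) (x) Sym^m(U).  Sym^{l2}(wedge^2 U) is the line
   spanned by (e1/\e2)^{l2}, on which A acts by det(A)^{l2}; Sym(U) is
   realized as polynomials in X_0 (= e1), X_1 (= e2). *)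

Definition Xv (i : 'I_2) : Wty R := mpoly.mpolyX (Cx R) (mpoly.mX i).

Definition rho (l2 : nat) (A : 'M[Cx R]_2) (w : Wty R) : Wty R :=
  let Ae1 : Wty R := A 0 0 *: Xv 0 + A 1 0 *: Xv 1 in
  let Ae2 : Wty R := A 0 1 *: Xv 0 + A 1 1 *: Xv 1 in
  (\det A ^+ l2) *: mpoly.comp_mpoly [tuple Ae1; Ae2] w.

(* basis vector w_k = (e1/\e2)^{l2} e1^{m-k} e2^k *)
Definition wk (m k : nat) : Wty R := Xv 0 ^+ (m - k) * Xv 1 ^+ k.

(* omega = (I_2  i I_2  0) and epsilon = (I_2 ; 0) *)
Definition omega : 'M[Cx R]_(2, n) :=
  \matrix_(a < 2, b < n)
    (if nat_of_ord b == nat_of_ord a then 1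
     else if nat_of_ord b == (nat_of_ord a + 2)%N then iC else 0).
Definition epsilon : 'M[Cx R]_(n, 2) :=
  \matrix_(a < n, b < 2) (if nat_of_ord a == nat_of_ord b then 1 else 0).

Definition Psi (l2 : nat) (w : Wty R) : 'M[Cx R]_n -> Wty R :=
  fun gamma => rho l2 (omega *m gamma *m epsilon) w.

Definition toCmx (g : 'M[R]_n) : 'M[Cx R]_n := map_mx toC g.

Definition pi_act (g : 'M[R]_n) (f : 'M[Cx R]_n -> Wty R) : 'M[Cx R]_n -> Wty R :=
  fun gamma => f (gamma *m toCmx g).

Definition admissible (l1 l2 i j k : nat) : bool :=
  [|| [&& i == 0%N, l1 == 0%N, l2 == 0%N, j == 0%N & k == 0%N],
      [&& i == 1%N, l2 == 0%N, j == 0%N & k == 0%N]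
    | [&& i == 2%N, (k <= l1 - l2)%N & ~~ odd (l2 + k)]].

Definition c1 (l1 l2 k : nat) : nat := (l2 + (l1 - l2) - k)%N.
Definition c2 (l2 k : nat) : nat := (l2 + k)%N.

Definition xi (l1 l2 i j k : nat) (J : {fset 'cV[R]_n}) : R :=
  if (i == #|` J|) && (i < 2)%N then 1
  else if (i == #|` J|) && (i == 2%N) then
    pJ j J * q1 J ^+ c1 l1 l2 k * q2 J ^+ c2 l2 k
  else 0.

Definition psi (s : {fset 'cV[R]_n} -> 'M[R]_n) (l1 l2 i j k : nat)
  (J : {fset 'cV[R]_n}) : 'M[Cx R]_n -> Wty R :=
  fun gamma => toC (xi l1 l2 i j k J) *: pi_act (s J) (Psi l2 (wk (l1 - l2) k)) gamma.

End Defs.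

(* Main.v *)
Require Import Defs.
From HB Require Import structures.
From mathcomp Require Import all_boot all_order all_algebra.
From mathcomp Require Import finmap.
From mathcomp Require Import complex.
From mathcomp Require Import mpoly.
From mathcomp Require Import all_classical all_reals all_analysis.
From mathcomp Require Import ring lra zify.
Import Order.TTheory GRing.Theory Num.Theory.
Local Open Scope ring_scope.

Set Implicit Arguments. Unset Strict Implicit. Unset Printing Implicit Defensive.
Section S.
Variable R : realType.
Lemma mXU (i : 'I_2) : mX i = mnm1 i.
Proof. apply/mnmP => j; rewrite mnm1E /mX mnmE eq_sym. by []. Qed.

Definition cp (A : 'M[Cx R]_2) (j : 'I_2) : Wty R := A 0 j *: Xv R 0 + A 1 j *: Xv R 1.

Lemma rho_wk l2 m k (A : 'M[Cx R]_2) :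
  rho l2 A (wk R m k) = \det A ^+ l2 *: (cp A 0 ^+ (m - k) * cp A 1 ^+ k).
Proof.
rewrite /rho /wk rmorphM /= !rmorphXn /= /Xv !mXU !comp_mpolyXU /=.
by rewrite /cp /Xv !mXU.
Qed.

Lemma det2 (A : 'M[Cx R]_2) : \det A = A 0 0 * A 1 1 - A 0 1 * A 1 0.
Proof.
rewrite (expand_det_row _ 0) !big_ord_recl big_ord0 /cofactor !det_mx11 !mxE /=.
have E1 : lift 0 0 = 1 :> 'I_2 by apply/val_inj.
have E2 : lift ord0 ord0 = 1 :> 'I_2 by apply/val_inj.
have E3 : lift (lift ord0 ord0) 0 = 0 :> 'I_2 by apply/val_inj.
have E4 : lift ord0 0 = 1 :> 'I_2 by apply/val_inj.
have E5 : lift 1 0 = 0 :> 'I_2 by apply/val_inj.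
rewrite ?E1 ?E2 ?E3 ?E4 ?E5 /= expr0 ?expr1 ?addr0 mul1r mulN1r mulrN. by [].
Qed.
Lemma rho_cols l2 m k (A B : 'M[Cx R]_2) (s0 s1 : R) :
  (((m - k + l2) != 0)%N -> forall i, B i 0 = real_complex R s0 * A i 0) ->
  (((k + l2) != 0)%N -> forall i, B i 1 = real_complex R s1 * A i 1) ->
  s0 ^+ (m - k + l2) * s1 ^+ (k + l2) = 1 ->
  rho l2 B (wk R m k) = rho l2 A (wk R m k).
Proof.
move=> H0 H1 Hs; rewrite !rho_wk.
have cpE j s : (forall i, B i j = real_complex R s * A i j) ->
    cp B j = real_complex R s *: cp A j.
  by move=> H; rewrite /cp !H scalerDr !scalerA.
have H0' : cp B 0 ^+ (m - k) = real_complex R s0 ^+ (m - k) *: cp A 0 ^+ (m - k).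
  case E: (m - k)%N => [|e]; first by rewrite !expr0 scale1r.
  by rewrite (cpE _ s0) ?exprZn //; apply: H0; rewrite E.
have H1' : cp B 1 ^+ k = real_complex R s1 ^+ k *: cp A 1 ^+ k.
  case E: k H1 => [|e] H1; first by rewrite !expr0 scale1r.
  by rewrite (cpE _ s1) ?exprZn //; apply: H1.
have Hd : \det B ^+ l2 = real_complex R (s0 * s1) ^+ l2 * \det A ^+ l2.
  case E: l2 H0 H1 => [|e] H0 H1; first by rewrite !expr0 mulr1.
  rewrite -exprMn; congr (_ ^+ _).
  rewrite !det2 !H0 ?H1 ?addnS //; rewrite rmorphM /=; ring.
rewrite H0' H1' Hd -scalerAr -scalerAl !scalerA; congr (_ *: _).
have -> : (s0 * s1)%:C%C ^+ l2 * \det A ^+ l2 * s1%:C%C ^+ k * s0%:C%C ^+ (m - k) =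
   ((s0 * s1) ^+ l2 * s1 ^+ k * s0 ^+ (m - k))%:C%C * \det A ^+ l2.
  by rewrite !rmorphM !rmorphXn !rmorphM /=; ring.
have -> : (s0 * s1) ^+ l2 * s1 ^+ k * s0 ^+ (m - k) = 1.
  by rewrite -Hs exprMn !exprD; ring.
by rewrite rmorph1 mul1r.
Qed.
End S.
Section Main.
Variables (R : realType) (n : nat).
Implicit Types (x y a b : 'cV[R]_n) (g h : 'M[R]_n) (J : {fset 'cV[R]_n}).

Definition Emx : 'M[R]_(n,2) :=
  \matrix_(a < n, b < 2) (if nat_of_ord a == nat_of_ord b then 1 else 0).

Lemma eps_E : epsilon R n = map_mx (real_complex R) Emx.
Proof. apply/matrixP => a b; rewrite !mxE; by case: ifP. Qed.

Lemma dotC x y : dot x y = dot y x.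
Proof.
rewrite /dot; have -> : x^T *m y = (y^T *m x)^T by rewrite trmx_mul trmxK.
by rewrite mxE.
Qed.

Lemma dot_g g x y : in_On g -> dot (g *m x) (g *m y) = dot x y.
Proof. move/eqP=> Hg; by rewrite /dot trmx_mul -!mulmxA (mulmxA g^T) Hg mul1mx. Qed.

Lemma g_inj g : in_On g -> injective (mulmx g : 'cV[R]_n -> 'cV[R]_n).
Proof. move/eqP=> Hg x y /(congr1 (mulmx g^T)); by rewrite !mulmxA Hg !mul1mx. Qed.

Lemma mem_act g J x : x \in J -> g *m x \in act g J.
Proof. by move=> xJ; apply/imfsetP; exists x. Qed.

Lemma act_memP g J y : y \in act g J -> exists2 x, x \in J & y = g *m x.
Proof. by move/imfsetP. Qed.

Lemma card_act g J : in_On g -> #|` act g J| = #|` J|.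
Proof. move=> Hg; rewrite /act card_imfset //; exact: g_inj. Qed.

Lemma memJ J x : (x \in J) = (x \in enum_fset J).
Proof. by []. Qed.

Lemma ipJ_2 J a b : #|` J| = 2%N -> a \in J -> b \in J -> a != b -> ipJ J = dot a b.
Proof.
rewrite /ipJ !memJ; have := fset_uniq J.
case: (enum_fset J) => [|x [|y [|z t]]] //= /andP[]; rewrite inE => xy _ _.
rewrite !inE => /orP[]/eqP-> /orP[]/eqP->; rewrite ?eqxx //.
by rewrite dotC.
Qed.

Lemma ipJ_1 J a : #|` J| = 1%N -> a \in J -> ipJ J = dot a a.
Proof.
rewrite /ipJ !memJ; case: (enum_fset J) => [|x [|y t]] //= _.
by rewrite inE => /eqP->.
Qed.

Lemma ipJ_act g J : in_On g -> ipJ (act g J) = ipJ J.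
Proof.
move=> Hg.
case E: (enum_fset J) => [|x [|y [|z t]]].
- have -> : J = fset0 by apply: cardfs0_eq; rewrite E.
  by rewrite /act imfset0.
- have xJ : x \in J by rewrite memJ E inE.
  by rewrite (ipJ_1 _ xJ) ?E // (ipJ_1 _ (mem_act g xJ)) ?card_act ?E ?dot_g.
- have xJ : x \in J by rewrite memJ E !inE eqxx.
  have yJ : y \in J by rewrite memJ E !inE eqxx orbT.
  have xy : x != y by have := fset_uniq J; rewrite E /= !inE => /andP[]; case: eqP.
  rewrite (ipJ_2 _ xJ yJ) ?E // (ipJ_2 _ (mem_act g xJ) (mem_act g yJ)) ?card_act ?E ?dot_g //.
  + by apply: contra xy => /eqP/(g_inj Hg)->.
- rewrite /ipJ E.
  have : size (enum_fset (act g J)) = size (enum_fset J) by exact: card_act.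
  by rewrite E; case: (enum_fset (act g J)) => [|? [|? [|? ?]]].
Qed.

Lemma indep_act theta g J : in_On g -> indep2 theta J -> indep2 theta (act g J).
Proof.
move=> Hg [Hc Hs Hn]; split.
- by rewrite card_act.
- by move=> y /act_memP [x xJ ->]; rewrite /on_sphere dot_g //; exact: Hs.
- move=> y1 y2 /act_memP[x1 x1J ->] /act_memP[x2 x2J ->] ne; rewrite dot_g //.
  by apply: Hn => //; apply: contra ne => /eqP->.
Qed.

Lemma repJ_act g J : in_On g -> repJ (act g J) = repJ J.
Proof. by move=> Hg; rewrite /repJ /q1 /q2 ipJ_act // -!cardfs_eq0 card_act. Qed.

Lemma xi_act l1 l2 i j k g J : in_On g -> xi l1 l2 i j k (act g J) = xi l1 l2 i j k J.
Proof. by move=> Hg; rewrite /xi /pJ /q1 /q2 card_act // ipJ_act. Qed.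

Lemma vE (a b : R) (t : 'I_n) : vec2 n a b t 0 = Emx t 0 * a + Emx t 1 * b.
Proof.
rewrite !mxE; case: t => [[|[|t]] /=] ?; by rewrite ?mul1r ?mul0r ?addr0 ?add0r.
Qed.

Lemma hv h (a b : R) (l : 'I_n) :
  (h *m vec2 n a b) l 0 = (h *m Emx) l 0 * a + (h *m Emx) l 1 * b.
Proof.
rewrite mxE (eq_bigr (fun t => h l t * Emx t 0 * a + h l t * Emx t 1 * b)); last first.
  by move=> t _; rewrite vE mulrDr !mulrA.
by rewrite big_split /= !mxE -!mulr_suml.
Qed.

Lemma colrel (Mo : 'M[Cx R]_(2,n)) (P Q : 'M[R]_(n,2)) (j : 'I_2) (s : R) :
  (forall l, P l j = s * Q l j) ->
  forall i, (Mo *m map_mx (real_complex R) P) i j = real_complex R s * (Mo *m map_mx (real_complex R) Q) i j.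
Proof.
move=> H i; rewrite !mxE mulr_sumr; apply: eq_bigr => l _.
by rewrite !mxE H rmorphM mulrCA.
Qed.

Lemma finish (Mo : 'M[Cx R]_(2,n)) h l2 m k (s1 : R) :
  ~~ odd (l2 + k) ->
  (((m - k + l2) != 0)%N -> forall l, (h *m Emx) l 0 = 1 * Emx l 0) ->
  (((k + l2) != 0)%N -> forall l, (h *m Emx) l 1 = s1 * Emx l 1) ->
  (s1 = 1) \/ (s1 = -1) ->
  rho l2 (Mo *m map_mx (real_complex R) (h *m Emx)) (wk R m k) =
  rho l2 (Mo *m map_mx (real_complex R) Emx) (wk R m k).
Proof.
move=> Hodd H0 H1 Hs1; apply: (@rho_cols _ _ _ _ _ _ 1 s1).
- by move=> /H0 H; apply: colrel.
- by move=> /H1 H; apply: colrel.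
- rewrite expr1n mul1r; case: Hs1 => ->; first by rewrite expr1n.
  by rewrite -signr_odd addnC (negbTE Hodd) expr0.
Qed.

Lemma eqv h (x y x' y' : R) : h *m vec2 n x y = vec2 n x' y' ->
  forall l, (h *m Emx) l 0 * x + (h *m Emx) l 1 * y = Emx l 0 * x' + Emx l 1 * y'.
Proof. by move=> E l; rewrite -hv E vE. Qed.

Lemma core_vec (c d : R) h (Mo : 'M[Cx R]_(2,n)) l1 l2 k :
  (1 < n)%N -> in_On h ->
  (forall a, a \in [fset vec2 n c d; vec2 n c (-d)]%fset ->
     h *m a \in [fset vec2 n c d; vec2 n c (-d)]%fset) ->
  (c != 0) || (l1 - k == 0)%N -> (d != 0) || (l2 + k == 0)%N ->
  (l2 <= l1)%N -> (k <= l1 - l2)%N -> ~~ odd (l2 + k) ->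
  rho l2 (Mo *m map_mx (real_complex R) (h *m Emx)) (wk R (l1 - l2) k) =
  rho l2 (Mo *m map_mx (real_complex R) Emx) (wk R (l1 - l2) k).
Proof.
move=> Hn Hh Hm Hc Hd Hl Hk Hodd.
have ha := Hm _ (fset21 _ _). have hb := Hm _ (fset22 _ _).
have cnz : ((l1 - l2 - k + l2) != 0)%N -> c != 0.
  move=> Hne; case/orP: Hc => // /eqP e; exfalso; move: Hne; apply/negP/negPn/eqP; lia.
have cancel (x y z : R) : z != 0 -> (x - y) * z = 0 -> x = y.
  by move=> zn /eqP; rewrite mulf_eq0 subr_eq0 (negbTE zn) orbF => /eqP.
have [d0|dn0] := eqVneq d 0.
  subst d; apply: (@finish _ _ _ _ _ 1) => //; last by left.
  + move=> /cnz cn0 l; rewrite mul1r; apply: (cancel _ _ c) => //.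
    move: ha; rewrite !in_fset2 => /orP[]/eqP/eqv Ha; have := Ha l; lra.
  + move=> H; exfalso; move: Hd H; rewrite eqxx /= addnC => /eqP ->; by [].
have Hab : h *m vec2 n c d != h *m vec2 n c (- d).
  apply/negP => /eqP /(g_inj Hh) /(congr1 (fun v : 'cV[R]_n => v (Ordinal Hn) 0)).
  rewrite !mxE /= => e; move/eqP: dn0; apply; lra.
move: ha hb Hab; rewrite !in_fset2 => /orP[]/eqP Ha /orP[]/eqP Hb.
- by move=> /negP[]; rewrite Ha Hb.
- move=> _; move: Ha Hb => /eqv Ha /eqv Hb.
  apply: (@finish _ _ _ _ _ 1) => //; last by left.
  + move=> /cnz cn0 l; rewrite mul1r; apply: (cancel _ _ c) => //.
    have := Ha l; have := Hb l; lra.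
  + move=> _ l; rewrite mul1r; apply: (cancel _ _ d) => //.
    have := Ha l; have := Hb l; lra.
- move=> _; move: Ha Hb => /eqv Ha /eqv Hb.
  apply: (@finish _ _ _ _ _ (-1)) => //; last by right.
  + move=> /cnz cn0 l; rewrite mul1r; apply: (cancel _ _ c) => //.
    have := Ha l; have := Hb l; lra.
  + move=> _ l; apply: (cancel _ _ d) => //.
    have := Ha l; have := Hb l; lra.
- by move=> /negP[]; rewrite Ha Hb.
Qed.

Lemma toC_rc : (@toC R) = real_complex R.
Proof. by []. Qed.

Lemma On_T g : in_On g -> g *m g^T = 1%:M.
Proof. by move/eqP/mulmx1C. Qed.

End Main.

Theorem mainTheorem5 (R : realType) (theta : R) (n : nat) (l1 l2 i j k : nat)
  (s : {fset 'cV[R]_n} -> 'M[R]_n) :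
  (4 <= n)%N -> (l2 <= l1)%N -> admissible l1 l2 i j k ->
  is_section theta s ->
  forall (g : 'M[R]_n) (J : {fset 'cV[R]_n}),
    in_On g -> indep2 theta J ->
    forall gamma : 'M[Cx R]_n, in_OnC gamma ->
      psi s l1 l2 i j k (act g J) gamma = pi_act g (psi s l1 l2 i j k J) gamma.
Proof.
move=> Hn Hl Had Hsec g J Hg HJ gamma _.
rewrite /psi /pi_act (xi_act l1 l2 i j k J Hg).
have [x0|xn0] := eqVneq (xi l1 l2 i j k J) 0.
  have sc0 : forall p : Wty R, toC 0 *: p = 0.
    by move=> p; rewrite toC_rc rmorph0; apply: scale0r.
  by rewrite x0 [LHS]sc0 [RHS]sc0.
suff -> : Psi l2 (wk R (l1 - l2) k) (gamma *m toCmx (s (act g J))) =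
  Psi l2 (wk R (l1 - l2) k) (gamma *m toCmx g *m toCmx (s J)) by [].
have [HS1 HR1] := Hsec _ (indep_act Hg HJ). have [HS2 HR2] := Hsec _ HJ.
rewrite (repJ_act J Hg) in HR1.
set S1 := s (act g J) in HS1 HR1 *; set S2 := s J in HS2 HR2 *.
set h := S1^T *m g *m S2.
have Hh : in_On h.
  apply/eqP; rewrite /h !trmx_mul trmxK.
  rewrite -!mulmxA (mulmxA S1) (On_T HS1) mul1mx (mulmxA g^T) (eqP Hg) mul1mx.
  exact/eqP.
have E : g *m S2 = S1 *m h by rewrite /h !mulmxA (On_T HS1) mul1mx.
have -> : gamma *m toCmx g *m toCmx S2 = (gamma *m toCmx S1) *m toCmx h.
  by rewrite -mulmxA /toCmx toC_rc -map_mxM E map_mxM mulmxA.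
have Hm : forall a, a \in repJ J -> h *m a \in repJ J.
  move=> a aR.
  have : g *m (S2 *m a) \in act g J by apply: mem_act; rewrite -HR2; apply: mem_act.
  rewrite -HR1 => /act_memP [b bR eb].
  by rewrite /h -mulmxA -mulmxA eb mulmxA (eqP HS1) mul1mx.
rewrite /Psi eps_E -/(toCmx h) /toCmx toC_rc.
rewrite !mulmxA -(mulmxA _ (map_mx (real_complex R) h)) -map_mxM.
set Mo := omega R n *m gamma *m map_mx (real_complex R) S1.
symmetry.
have Hn2 : (1 < n)%N by apply: leq_trans Hn.
have half_neq0 (q : R) : q != 0 -> q / 2 != 0.
  by move=> qn; rewrite mulf_neq0 // invr_eq0 pnatr_eq0.
move: Had xn0; rewrite /admissible => /or3P[].
- case/and5P => /eqP-> /eqP-> /eqP-> /eqP-> /eqP-> _.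
  apply: (@finish R n _ _ _ _ _ 1) => //; last by left.
- case/and4P => /eqP-> /eqP El2 /eqP-> /eqP Ek; subst l2 k.
  move=> xn0; have cJ : #|` J| = 1%N.
    by move: xn0; rewrite /xi; case: (eqVneq 1%N #|` J|) => [<-//|_]; rewrite /= eqxx.
  case/cardfs1P: (introT eqP cJ) => x EJ.
  have xJ : x \in J by rewrite EJ fset11.
  have Jn0 : J != fset0 by rewrite -cardfs_eq0 cJ.
  have ip1 : ipJ J = 1 by rewrite (ipJ_1 cJ xJ); apply/eqP; case: HJ => _ Hs _; exact: Hs.
  rewrite /repJ (negbTE Jn0) in Hm.
  apply: (core_vec _ Hn2 Hh Hm) => //.
  apply/orP; left; apply: half_neq0; rewrite /q1 ip1 sqrtr_eq0 -ltNge; lra.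
  by rewrite orbT.
- case/and3P => /eqP Hi Hk Hodd; subst i.
  move=> xn0.
  have cJ : #|` J| = 2%N.
    by move: xn0; rewrite /xi; case: (eqVneq 2%N #|` J|) => [<-//|_]; rewrite /= eqxx.
  have : pJ j J * q1 J ^+ c1 l1 l2 k * q2 J ^+ c2 l2 k != 0.
    by move: xn0; rewrite /xi cJ /=.
  rewrite !mulf_eq0 !negb_or => /andP[/andP[_ H1] H2].
  have Jn0 : J != fset0 by rewrite -cardfs_eq0 cJ.
  rewrite /repJ (negbTE Jn0) in Hm.
  apply: (core_vec _ Hn2 Hh Hm) => //.
  + move: H1; rewrite expf_eq0 negb_and /c1 -leqNgt leqn0 => /orP[/eqP e|qn].
      by apply/orP; right; apply/eqP; lia.
    by rewrite half_neq0.
  + move: H2; rewrite expf_eq0 negb_and /c2 -leqNgt leqn0 => /orP[/eqP e|qn].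
      by apply/orP; right; apply/eqP; lia.
    by rewrite half_neq0.
Qed.
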